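(* Let $(A,\leq,\cdot,/)$ be a right-residuated magma satisfying condition (N), and let $B\subseteq A$ be closed under $\sqcap$. The following are equivalent: (1) $(B,\sqcap)$ is a semilattice; (2) $\sqcap$ is commutative on $B$; (3) for all $x,y\in B$, $(x\sqcap y)\sqcap x = x\sqcap y$ and $x\sqcap y\leq y$.
   Context: Write $xy$ for $x\cdot y$; $\cdot$ binds more strongly than $/$, and $/$ binds more strongly than $\sqcap$, where $x\sqcap y := (x/y)y$. A right-residuated magma is a structure $(A,\leq,\cdot,/)$ where $(A,\leq)$ is a poset and $xy\leq z\iff x\leq z/y$ for all $x,y,z\in A$. Condition (N): for all $x,y\in A$, $x\leq y\iff x = y\sqcap x$. *)

(* Defs.v *)
Record RRMagma := {
  carrier :> Type;
  le : carrier -> carrier -> Prop;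
  mul : carrier -> carrier -> carrier;
  rdiv : carrier -> carrier -> carrier;
  le_refl : forall x, le x x;
  le_antisym : forall x y, le x y -> le y x -> x = y;
  le_trans : forall x y z, le x y -> le y z -> le x z;
  residuation : forall x y z, le (mul x y) z <-> le x (rdiv z y)
}.

Definition rmeet (A : RRMagma) (x y : A) : A := mul A (rdiv A x y) y.

Definition condN (A : RRMagma) : Prop :=
  forall x y : A, le A x y <-> x = rmeet A y x.

Definition meet_closed (A : RRMagma) (B : A -> Prop) : Prop :=
  forall x y, B x -> B y -> B (rmeet A x y).

Definition is_semilattice_on (A : RRMagma) (B : A -> Prop) : Prop :=
  (forall x y z, B x -> B y -> B z ->
      rmeet A (rmeet A x y) z = rmeet A x (rmeet A y z)) /\
  (forall x y, B x -> B y -> rmeet A x y = rmeet A y x) /\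
  (forall x, B x -> rmeet A x x = x).

(* Main.v *)
Require Import Defs.

Section S.
Variable A : RRMagma.
Notation le := (le A).
Notation m := (rmeet A).

Lemma meet_le_l (x y : A) : le (m x y) x.
Proof. unfold rmeet. apply (proj2 (residuation A _ _ _)). apply le_refl. Qed.

Lemma mul_mono (a b y : A) : le a b -> le (mul A a y) (mul A b y).
Proof.
  intro h. apply (proj2 (residuation A _ _ _)).
  apply le_trans with b; auto. apply (proj1 (residuation A _ _ _)). apply le_refl.
Qed.

Lemma div_mono (z x y : A) : le z x -> le (rdiv A z y) (rdiv A x y).
Proof.
  intro h. apply (proj1 (residuation A _ _ _)).
  apply le_trans with z; auto. apply meet_le_l.
Qed.
End S.

Theorem mainTheorem4 (A : RRMagma) (B : A -> Prop)
  (hN : condN A) (hB : meet_closed A B) :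
  (is_semilattice_on A B <->
     (forall x y, B x -> B y -> rmeet A x y = rmeet A y x)) /\
  ((forall x y, B x -> B y -> rmeet A x y = rmeet A y x) <->
     (forall x y, B x -> B y ->
        rmeet A (rmeet A x y) x = rmeet A x y /\ le A (rmeet A x y) y)).
Proof.
  assert (idem : forall x : A, rmeet A x x = x).
  { intro x. symmetry. apply hN. apply le_refl. }
  assert (C2 : forall (C : forall x y, B x -> B y -> rmeet A x y = rmeet A y x)
     x y z, B x -> B y -> B z -> le A z x -> le A z y -> le A z (rmeet A x y)).
  { intros C x y z bx by_ bz hx hy.
    assert (e : z = rmeet A z y).
    { rewrite <- C by auto. apply hN. auto. }
    rewrite e. unfold rmeet at 1. unfold rmeet.
    apply mul_mono. apply div_mono. auto. }
  assert (lr : forall (C : forall x y, B x -> B y -> rmeet A x y = rmeet A y x)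
     x y, B x -> B y -> le A (rmeet A x y) y).
  { intros C x y bx by_. rewrite C by auto. apply meet_le_l. }
  split; split.
  - intros [_ [h _]]. exact h.
  - intro C. split; [|split; [exact C| intros; apply idem]].
    intros x y z bx by_ bz.
    assert (bxy := hB _ _ bx by_). assert (byz := hB _ _ by_ bz).
    apply le_antisym.
    + apply C2; auto.
      * apply le_trans with (rmeet A x y); apply meet_le_l.
      * apply C2; auto; try (apply lr; auto; fail).
        apply le_trans with (rmeet A x y). apply meet_le_l. apply lr; auto.
    + apply C2; auto.
      * apply C2; auto. apply meet_le_l.
        apply le_trans with (rmeet A y z). apply lr; auto. apply meet_le_l.
      * apply le_trans with (rmeet A y z); apply lr; auto.
  - intros C x y bx by_. split; [|apply lr; auto].
    rewrite C by auto. symmetry. apply hN. apply meet_le_l.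
  - intros H x y bx by_.
    assert (key : forall x y, B x -> B y -> le A (rmeet A x y) (rmeet A y x)).
    { intros a b ba bb. destruct (H a b ba bb) as [e l].
      apply le_trans with (mul A (rdiv A (rmeet A a b) a) a).
      { change (le A (rmeet A a b) (rmeet A (rmeet A a b) a)). rewrite e. apply le_refl. }
      unfold rmeet at 2. apply mul_mono. apply (proj1 (residuation A _ _ _)).
      change (le A (rmeet A (rmeet A a b) a) b). rewrite e. exact l. }
    apply le_antisym; apply key; auto.
Qed.
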